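(* Let $A\subseteq\omega$ be an AP-set and let $f:\omega\to\omega$ be any function. Then there exists an AP-set $C\subseteq A$ such that either (1) $|f[C]|=1$, or (2) $f$ is finite-to-one on $C$, and if $\langle x_n\rangle_{n=0}^\infty$ enumerates $f[C]$ in increasing order, then $\lim_{n\to\infty}(x_{n+1}-x_n)=\infty$. In particular, in either case $f[C]$ is not an IP-set.
   Context: $\omega=\{0,1,2,\dots\}$. A set $A\subseteq\omega$ is an AP-set if it contains arithmetic progressions of every finite length. For $B\subseteq\omega$, $FS(B)$ denotes the set of all sums $\sum_{n\in F}n$ over nonempty finite subsets $F\subseteq B$. A set $A\subseteq\omega$ is an IP-set if there is an infinite $B\subseteq\omega$ with $FS(B)\subseteq A$. *)

(* Defs.v *)
From Stdlib Require Import Arith List.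
Import ListNotations.

Definition natset := nat -> Prop.

Definition AP_set (A : natset) : Prop :=
  forall k : nat, exists a d : nat, 0 < d /\ forall i : nat, i < k -> A (a + i * d).

Definition FS (B : natset) : natset :=
  fun z => exists F : list nat, F <> [] /\ NoDup F /\
             (forall n, In n F -> B n) /\ z = list_sum F.

Definition infinite_set (B : natset) : Prop :=
  forall N : nat, exists n, N <= n /\ B n.

Definition IP_set (A : natset) : Prop :=
  exists B : natset, infinite_set B /\ forall z, FS B z -> A z.

Definition finite_set (P : natset) : Prop :=
  exists s : list nat, forall x, P x -> In x s.

Definition image (f : nat -> nat) (C : natset) : natset :=
  fun y => exists x, C x /\ f x = y.

Definition subset (C A : natset) : Prop := forall x, C x -> A x.

Definition finite_to_one_on (f : nat -> nat) (C : natset) : Prop :=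
  forall y, finite_set (fun x => C x /\ f x = y).

Definition increasing_enum (x : nat -> nat) (P : natset) : Prop :=
  (forall n, x n < x (S n)) /\ (forall y, P y <-> exists n, x n = y).

(* Main.v *)
Require Import Defs.
From Stdlib Require Import Arith List.
From Stdlib Require Import Lia Classical ClassicalEpsilon.
Import ListNotations.

Definition Mono (c : nat -> nat) (k N : nat) : Prop :=
  exists a d, 0 < d /\ d <= N /\ forall j, j < k -> a + j*d < N /\ c (a + j*d) = c a.

Definition VDW k r W := forall c : nat -> nat, (forall x, c x < r) -> Mono c k W.

Definition Foc (c : nat -> nat) (k s N : nat) : Prop :=
  exists f (dd : nat -> nat), f < N /\
   (forall i, i < s -> 0 < dd i /\ k * dd i <= f /\
       forall j, 1 <= j <= k -> c (f - j * dd i) = c (f - dd i)) /\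
   (forall i i', i < s -> i' < s -> i <> i' -> c (f - dd i) <> c (f - dd i')).

Lemma mono_of_focus c k N f d : 1 <= k -> f < N -> 0 < d -> k*d <= f ->
  (forall j, 1 <= j <= k -> c (f - j*d) = c (f - d)) -> c f = c (f - d) ->
  Mono c (S k) N.
Proof.
  intros Hk Hf Hd Hkd Hc Hcf.
  assert (Hdk : d <= k*d) by nia.
  exists (f - k*d), d. split; [lia|]. split; [lia|].
  intros j Hj.
  assert (Hjd : j*d <= k*d) by (apply Nat.mul_le_mono_r; lia).
  split; [lia|].
  assert (Ha : c (f - k*d) = c (f - d)) by (apply Hc; lia).
  rewrite Ha.
  destruct (Nat.eq_dec j k) as [->|Hne].
  - replace (f - k*d + k*d) with f by lia. exact Hcf.
  - assert (E : f - k*d + j*d = f - (k-j)*d).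
    { rewrite Nat.mul_sub_distr_r. lia. }
    rewrite E. apply Hc. lia.
Qed.

Lemma mono_shift c m n N k : Mono (fun x => c (m + x)) k n -> m + n <= N -> n <= N -> Mono c k N.
Proof.
  intros [a [d [Hd [HdN H]]]] H1 H2.
  exists (m + a), d. split; [lia|]. split; [lia|].
  intros j Hj. destruct (H j Hj) as [H3 H4]. split; [lia|].
  replace (m + a + j*d) with (m + (a + j*d)) by lia. exact H4.
Qed.

Fixpoint enc (r : nat) (g : nat -> nat) (m : nat) : nat :=
  match m with 0 => 0 | S m' => g m' + r * enc r g m' end.

Lemma enc_lt r g m : (forall x, g x < r) -> enc r g m < r ^ m.
Proof. intros Hg. induction m; simpl. lia. specialize (Hg m). nia. Qed.

Lemma digit r a b x y : a < r -> b < r -> a + r*x = b + r*y -> a = b /\ x = y.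
Proof.
  intros Ha Hb E. destruct (lt_eq_lt_dec x y) as [[H|H]|H].
  - exfalso. assert (r*(x+1) <= r*y) by (apply Nat.mul_le_mono_l; lia). nia.
  - subst. lia.
  - exfalso. assert (r*(y+1) <= r*x) by (apply Nat.mul_le_mono_l; lia). nia.
Qed.

Lemma enc_inj r g h m : (forall x, g x < r) -> (forall x, h x < r) ->
  enc r g m = enc r h m -> forall x, x < m -> g x = h x.
Proof.
  intros Hg Hh. induction m; simpl; intros E x Hx. lia.
  destruct (digit r _ _ _ _ (Hg m) (Hh m) E) as [E1 E2].
  destruct (Nat.eq_dec x m) as [->|Hne]. exact E1. apply IHm; auto; lia.
Qed.

Lemma arith1 n b0 k e f j t : j <= k -> t <= f ->
  n*(b0+k*e) + f - (t + j*(n*e)) = n*(b0 + (k-j)*e) + (f - t).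
Proof.
  intros Hj Ht. destruct (Nat.le_exists_sub j k Hj) as [q [-> _]].
  replace (q + j - j) with q by lia.
  replace (n*(b0+(q+j)*e)) with (n*(b0+q*e) + j*(n*e)) by ring. lia.
Qed.

Lemma claim k r (Hk : 1 <= k) (IH : forall r', exists W, VDW k r' W) :
  forall s, exists N, forall c, (forall x, c x < r) -> Mono c (S k) N \/ Foc c k s N.
Proof.
  induction s as [|s IHs].
  - exists 1. intros c Hc. right. exists 0, (fun _ => 0).
    split; [lia|]. split; intros; exfalso; lia.
  - destruct IHs as [n Hn].
    destruct (IH (r ^ n)) as [M HM].
    exists (n * (2*M)). intros c Hc.
    set (C := fun b => enc r (fun x => c (n*b + x)) n).
    assert (HC : forall b, C b < r ^ n) by (intro b; apply enc_lt; intro; apply Hc).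
    destruct (HM C HC) as [b0 [e [He [HeM Hb]]]].
    assert (Hpat : forall j x, j < k -> x < n -> c (n*(b0 + j*e) + x) = c (n*b0 + x)).
    { intros j x Hj Hx. destruct (Hb j Hj) as [_ E].
      exact (enc_inj r _ _ n (fun x => Hc _) (fun x => Hc _) E x Hx). }
    destruct (Hb 0 ltac:(lia)) as [Hb0 _].
    destruct (Hb (k-1) ltac:(lia)) as [Hbk _].
    destruct (Hn (fun x => c (n*b0 + x)) (fun x => Hc _)) as [Hm|[f [dd [Hf [Hdd Hdist]]]]].
    + left. apply (mono_shift c (n*b0) n); [exact Hm| nia | nia].
    + destruct (classic (exists i, i < s /\ c (n*b0 + f) = c (n*b0 + (f - dd i)))) as [[i [Hi Eq]]|Hno].
      * left. apply (mono_shift c (n*b0) n); [|nia|nia].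
        destruct (Hdd i Hi) as [H1 [H2 H3]].
        apply (mono_of_focus (fun x => c (n*b0 + x)) k n f (dd i)); auto.
      * right.
        set (F := n*(b0+k*e) + f).
        exists F, (fun i => if lt_dec i s then dd i + n*e else n*e).
        assert (Hn0 : 0 < n) by lia.
        assert (Hkey : forall i j, i < s -> 1 <= j <= k ->
                   c (F - j*(dd i + n*e)) = c (n*b0 + (f - dd i))).
        { intros i j Hi Hj. destruct (Hdd i Hi) as [H1 [H2 H3]].
          assert (j*dd i <= k*dd i) by (apply Nat.mul_le_mono_r; lia).
          unfold F.
          replace (j*(dd i + n*e)) with (j*dd i + j*(n*e)) by ring.
          rewrite (arith1 n b0 k e f j (j*dd i)) by lia.
          rewrite Hpat by lia. apply H3. lia. }
        assert (Hkey1 : forall i, i < s -> c (F - (dd i + n*e)) = c (n*b0 + (f - dd i))).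
        { intros i Hi. replace (F - (dd i + n*e)) with (F - 1*(dd i + n*e)) by lia.
          apply Hkey; lia. }
        assert (Hkeys : forall j, 1 <= j <= k -> c (F - j*(n*e)) = c (n*b0 + f)).
        { intros j Hj.
          replace (F - j*(n*e)) with (F - (0 + j*(n*e))) by reflexivity.
          unfold F. rewrite (arith1 n b0 k e f j 0) by lia.
          rewrite Nat.sub_0_r. rewrite Hpat by lia. reflexivity. }
        assert (Hkeys1 : c (F - n*e) = c (n*b0 + f)).
        { replace (F - n*e) with (F - 1*(n*e)) by lia. apply Hkeys; lia. }
        assert (E1 : k*e = (k-1)*e + e) by (rewrite Nat.mul_sub_distr_r; nia).
        assert (Hke : b0 + k*e + 1 <= 2*M) by lia.
        assert (n*(b0+k*e+1) <= n*(2*M)) by (apply Nat.mul_le_mono_l; lia).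
        split; [unfold F; nia|]. split.
        -- intros i Hi. destruct (lt_dec i s) as [Hi'|Hi']; cbv beta iota.
           ++ destruct (Hdd i Hi') as [H1 [H2 H3]]. split; [lia|]. split; [unfold F; nia|].
              intros j Hj. rewrite Hkey by lia. rewrite Hkey1 by lia. reflexivity.
           ++ assert (i = s) by lia. subst i. split; [nia|]. split; [unfold F; nia|].
              intros j Hj. rewrite Hkeys by lia. rewrite Hkeys1. reflexivity.
        -- intros i i' Hi Hi' Hne.
           destruct (lt_dec i s) as [Ha|Ha]; destruct (lt_dec i' s) as [Ha'|Ha']; cbv beta iota.
           ++ rewrite Hkey1 by lia. rewrite Hkey1 by lia. apply Hdist; auto.
           ++ rewrite Hkey1 by lia. rewrite Hkeys1. intros E. apply Hno. exists i. split; auto.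
           ++ rewrite Hkey1 by lia. rewrite Hkeys1. intros E. apply Hno. exists i'. split; auto.
           ++ exfalso; lia.
Qed.

Lemma pigeon r (g : nat -> nat) y : (forall i i', i < r -> i' < r -> i <> i' -> g i <> g i') ->
  (forall i, i < r -> g i < r) -> y < r -> exists i, i < r /\ g i = y.
Proof.
  intros Hinj Hb Hy.
  assert (HN : NoDup (map g (seq 0 r))).
  { apply NoDup_map_NoDup_ForallPairs; [|apply seq_NoDup].
    intros a b Ha Hb'. apply in_seq in Ha. apply in_seq in Hb'.
    intros E. destruct (Nat.eq_dec a b); auto. exfalso. apply (Hinj a b); auto; lia. }
  assert (Hi : incl (seq 0 r) (map g (seq 0 r))).
  { apply NoDup_length_incl; auto.
    - rewrite length_map. lia.
    - intros z Hz. apply in_map_iff in Hz. destruct Hz as [i [<- Hi]].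
      apply in_seq in Hi. apply in_seq. specialize (Hb i). lia. }
  assert (In y (seq 0 r)) by (apply in_seq; lia).
  apply Hi in H. apply in_map_iff in H. destruct H as [i [E Hi']].
  apply in_seq in Hi'. exists i. split; [lia|auto].
Qed.

Lemma vdw_S : forall k r, exists W, VDW (S k) r W.
Proof.
  induction k as [|k IHk]; intros r.
  - exists 1. intros c Hc. exists 0, 1. split; [lia|]. split; [lia|].
    intros j Hj. assert (j = 0) by lia; subst. simpl. split; [lia|reflexivity].
  - destruct (claim (S k) r ltac:(lia) IHk r) as [N HN].
    exists N. intros c Hc.
    destruct (HN c Hc) as [Hm|[f [dd [Hf [Hdd Hdist]]]]]; [exact Hm|].
    destruct (pigeon r (fun i => c (f - dd i)) (c f) Hdist (fun i _ => Hc _) (Hc f))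
      as [i [Hi E]].
    destruct (Hdd i Hi) as [H1 [H2 H3]].
    apply (mono_of_focus c (S k) N f (dd i)); auto. lia.
Qed.

Lemma vdw k r : exists W, forall c : nat -> nat, (forall x, c x < r) ->
  exists a d, 0 < d /\ forall j, j < k -> a + j*d < W /\ c (a + j*d) = c a.
Proof.
  destruct (vdw_S k r) as [W HW]. exists W. intros c Hc.
  destruct (HW c Hc) as [a [d [H1 [_ H2]]]]. exists a, d. split; auto.
Qed.

Lemma vdw_in (A : nat -> Prop) (hA : AP_set A) (k r : nat) (col : nat -> nat) :
  (forall x, col x < r) ->
  exists a d, 0 < d /\ forall j, j < k -> A (a + j*d) /\ col (a + j*d) = col a.
Proof.
  intros Hcol. destruct (vdw k r) as [W HW].
  destruct (hA W) as [a0 [d0 [Hd0 HA]]].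
  destruct (HW (fun i => col (a0 + i*d0)) (fun i => Hcol _)) as [a1 [d1 [Hd1 H]]].
  exists (a0 + a1*d0), (d1*d0). split; [nia|].
  intros j Hj. destruct (H j Hj) as [H1 H2].
  replace (a0 + a1*d0 + j*(d1*d0)) with (a0 + (a1 + j*d1)*d0) by ring.
  split; [apply HA; exact H1| exact H2].
Qed.

Lemma inf_pigeon (Q : nat -> nat -> Prop) B :
  (forall y k k', Q y k -> k' <= k -> Q y k') ->
  (forall k, exists y, y < B /\ Q y k) -> exists y, forall k, Q y k.
Proof.
  intros Hmon. induction B as [|B IH]; intros H.
  - destruct (H 0) as [y [Hy _]]. lia.
  - destruct (classic (forall k, Q B k)) as [Hall|Hn]; [eauto|].
    apply not_all_ex_not in Hn. destruct Hn as [k0 Hk0].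
    apply IH. intros k. destruct (H (Nat.max k k0)) as [y [Hy HQ]].
    exists y. split.
    + destruct (Nat.eq_dec y B) as [->|]; [|lia]. exfalso. apply Hk0.
      eapply Hmon; [exact HQ| lia].
    + eapply Hmon; [exact HQ|lia].
Qed.

Lemma bounded_notIP (P : natset) M : (forall z, P z -> z <= M) -> ~ IP_set P.
Proof.
  intros HM [B [HB HFS]]. destruct (HB (S M)) as [n [Hn HBn]].
  assert (HP : P n).
  { apply HFS. exists [n]. split; [discriminate|]. split.
    - constructor; [simpl; tauto|constructor].
    - split. + intros m [->|[]]. exact HBn. + simpl. lia. }
  specialize (HM n HP). lia.
Qed.

Lemma sep_notIP (P : natset) :
  (forall J, exists T, forall u v, P u -> P v -> T <= u -> u < v -> J < v - u) -> ~ IP_set P.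
Proof.
  intros Hsep [B [HB HFS]].
  destruct (HB 1) as [b1 [Hb1 HBb1]].
  destruct (Hsep b1) as [T HT].
  destruct (HB (T + b1 + 1)) as [b2 [Hb2 HBb2]].
  assert (H2 : P b2).
  { apply HFS. exists [b2]. split; [discriminate|]. split.
    - constructor; [simpl; tauto|constructor].
    - split. + intros m [->|[]]. exact HBb2. + simpl. lia. }
  assert (H12 : P (b1 + b2)).
  { apply HFS. exists [b1; b2]. split; [discriminate|]. split.
    - constructor; [simpl; intros [H|[]]; lia|constructor; [simpl; tauto|constructor]].
    - split. + intros m [->|[->|[]]]; assumption. + simpl. lia. }
  specialize (HT b2 (b1+b2) H2 H12 ltac:(lia) ltac:(lia)). lia.
Qed.

Lemma least_exists (Q : nat -> Prop) n : Q n -> exists m, Q m /\ forall k, Q k -> m <= k.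
Proof.
  induction n as [n IH] using lt_wf_ind. intros Hn.
  destruct (classic (exists k, Q k /\ k < n)) as [[k [Hk Hlt]]|Hno].
  - exact (IH k Hlt Hk).
  - exists n. split; auto. intros k Hk. destruct (Nat.le_gt_cases n k); auto.
    exfalso; apply Hno; eauto.
Qed.

Lemma enum_exists (P : natset) : (forall N, exists n, N <= n /\ P n) ->
  exists x, increasing_enum x P.
Proof.
  intros Hinf.
  assert (Hnx : forall t, exists y, (t <= y /\ P y) /\ forall k, t <= k /\ P k -> y <= k).
  { intros t. destruct (Hinf t) as [n Hn]. exact (least_exists (fun y => t <= y /\ P y) n Hn). }
  set (nxt := fun t => proj1_sig (constructive_indefinite_description _ (Hnx t))).
  assert (Hnxt : forall t, (t <= nxt t /\ P (nxt t)) /\ forall k, t <= k /\ P k -> nxt t <= k).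
  { intros t. unfold nxt. exact (proj2_sig (constructive_indefinite_description _ (Hnx t))). }
  set (x := fun n => nat_rect (fun _ => nat) (nxt 0) (fun _ prev => nxt (S prev)) n).
  assert (Hx0 : x 0 = nxt 0) by reflexivity.
  assert (HxS : forall n, x (S n) = nxt (S (x n))) by reflexivity.
  clearbody x.
  assert (HP : forall n, P (x n)).
  { intros [|n]; [rewrite Hx0|rewrite HxS]; apply Hnxt. }
  assert (Hinc : forall n, x n < x (S n)).
  { intros n. rewrite HxS. destruct (Hnxt (S (x n))) as [[H _] _]. lia. }
  assert (Hge : forall n, n <= x n).
  { induction n; [lia|]. specialize (Hinc n). lia. }
  assert (Hsurj : forall n y, P y -> y <= x n -> exists m, x m = y).
  { induction n as [|n IH]; intros y Hy Hle.
    - exists 0. rewrite Hx0 in *. destruct (Hnxt 0) as [_ Hmin].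
      specialize (Hmin y ltac:(split; [lia|exact Hy])). lia.
    - destruct (Nat.le_gt_cases y (x n)) as [Hl|Hl]; [apply (IH y Hy Hl)|].
      exists (S n). rewrite HxS in *. destruct (Hnxt (S (x n))) as [_ Hmin].
      specialize (Hmin y ltac:(split; [lia|exact Hy])). lia. }
  exists x. split; [exact Hinc|]. intros y. split.
  - intros Hy. apply (Hsurj y y Hy (Hge y)).
  - intros [n <-]. apply HP.
Qed.

Lemma gaps_from_sep (P : natset) x : increasing_enum x P ->
  (forall J, exists T, forall u v, P u -> P v -> T <= u -> u < v -> J < v - u) ->
  forall M, exists N, forall n, N <= n -> M <= x (S n) - x n.
Proof.
  intros [Hinc Hiff] Hsep M.
  assert (Hge : forall n, n <= x n).
  { induction n; [lia|]. specialize (Hinc n). lia. }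
  destruct (Hsep M) as [T HT]. exists T. intros n Hn.
  assert (P (x n)) by (apply Hiff; eauto).
  assert (P (x (S n))) by (apply Hiff; eauto).
  specialize (HT (x n) (x (S n)) H H0 ltac:(specialize (Hge n); lia) (Hinc n)). lia.
Qed.

Lemma mod_gap m u v : 0 < m -> u mod m = v mod m -> u < v -> m <= v - u.
Proof.
  intros Hm E Huv.
  pose proof (Nat.div_mod u m ltac:(lia)) as Hu.
  pose proof (Nat.div_mod v m ltac:(lia)) as Hv.
  rewrite E in Hu.
  assert (u / m < v / m) by nia.
  assert (m * (u/m + 1) <= m * (v/m)) by (apply Nat.mul_le_mono_l; lia).
  nia.
Qed.

Fixpoint mx (f : nat -> nat) (a d n : nat) : nat :=
  match n with 0 => 0 | S n' => Nat.max (f (a + n'*d)) (mx f a d n') end.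

Lemma mx_ge f a d n i : i < n -> f (a + i*d) <= mx f a d n.
Proof.
  induction n; simpl; intros H. lia.
  destruct (Nat.eq_dec i n) as [->|]; [lia|]. specialize (IHn ltac:(lia)). lia.
Qed.

Fixpoint Bs (f : nat -> nat) (st : nat -> nat -> nat -> nat*nat) (j : nat) : nat :=
  match j with
  | 0 => 0
  | S j' => Bs f st j' + mx f (fst (st (S j') (Bs f st j') j')) (snd (st (S j') (Bs f st j') j')) j' + S j'
  end.

Definition stg f st j := st (S j) (Bs f st j) j.

Definition Cset f st : natset :=
  fun x => exists j i, i < j /\ x = fst (stg f st j) + i * snd (stg f st j).

Lemma Bs_S f st j : Bs f st (S j) = Bs f st j + mx f (fst (stg f st j)) (snd (stg f st j)) j + S j.
Proof. reflexivity. Qed.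

Lemma Bs_mono f st i j : i <= j -> Bs f st i <= Bs f st j.
Proof. induction 1; [lia|]. rewrite Bs_S. lia. Qed.

Lemma Bs_ge f st j : j <= Bs f st j.
Proof. induction j; [lia|]. rewrite Bs_S. lia. Qed.

Lemma caseII (A : natset) (f : nat -> nat) (st : nat -> nat -> nat -> nat*nat)
  (HP : forall m B len, 0 < snd (st m B len) /\ forall i, i < len ->
     A (fst (st m B len) + i*snd (st m B len)) /\ B <= f (fst (st m B len) + i*snd (st m B len)) /\
     f (fst (st m B len) + i*snd (st m B len)) mod (S m) = f (fst (st m B len)) mod (S m)) :
  subset (Cset f st) A /\ AP_set (Cset f st) /\ finite_to_one_on f (Cset f st) /\
  (forall N, exists n, N <= n /\ image f (Cset f st) n) /\
  (forall J, exists T, forall u v, image f (Cset f st) u -> image f (Cset f st) v ->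
       T <= u -> u < v -> J < v - u).
Proof.
  assert (Hpt : forall j i, i < j ->
    A (fst (stg f st j) + i*snd (stg f st j)) /\
    Bs f st j <= f (fst (stg f st j) + i*snd (stg f st j)) /\
    f (fst (stg f st j) + i*snd (stg f st j)) + S j <= Bs f st (S j) /\
    f (fst (stg f st j) + i*snd (stg f st j)) mod (S (S j)) = f (fst (stg f st j)) mod (S (S j))).
  { intros j i Hi. destruct (HP (S j) (Bs f st j) j) as [_ H].
    destruct (H i Hi) as [H1 [H2 H3]]. unfold stg.
    split; [exact H1|]. split; [exact H2|]. split; [|exact H3].
    rewrite Bs_S. pose proof (mx_ge f (fst (stg f st j)) (snd (stg f st j)) j i Hi).
    unfold stg in *. lia. }
  split; [|split; [|split; [|split]]].
  - intros x [j [i [Hi ->]]]. apply Hpt; auto.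
  - intros k. exists (fst (stg f st k)), (snd (stg f st k)). split.
    + unfold stg. apply HP.
    + intros i Hi. exists k, i. auto.
  - intros y.
    exists (flat_map (fun j => map (fun i => fst (stg f st j) + i*snd (stg f st j)) (seq 0 j))
                     (seq 0 (S y))).
    intros x [[j [i [Hi ->]]] Hy].
    destruct (Hpt j i Hi) as [_ [H2 _]]. pose proof (Bs_ge f st j).
    apply in_flat_map. exists j. split; [apply in_seq; lia|].
    apply in_map_iff. exists i. split; [reflexivity|apply in_seq; lia].
  - intros N. exists (f (fst (stg f st (S N)) + 0 * snd (stg f st (S N)))). split.
    + destruct (Hpt (S N) 0 ltac:(lia)) as [_ [H2 _]]. pose proof (Bs_ge f st (S N)). lia.
    + eexists. split; [exists (S N), 0; split; [lia|reflexivity]|reflexivity].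
  - intros J. exists (Bs f st J). intros u v [x [[i [t [Ht ->]]] <-]] [x' [[i' [t' [Ht' ->]]] <-]] HJ Huv.
    destruct (Hpt i t Ht) as [_ [L1 [U1 M1]]].
    destruct (Hpt i' t' Ht') as [_ [L2 [U2 M2]]].
    assert (HiJ : J <= i).
    { destruct (Nat.le_gt_cases J i) as [|Hlt]; auto.
      pose proof (Bs_mono f st (S i) J Hlt). lia. }
    destruct (lt_eq_lt_dec i i') as [[Hlt|<-]|Hgt].
    + pose proof (Bs_mono f st (S i) i' Hlt). lia.
    + rewrite <- M2 in M1. pose proof (mod_gap (S (S i)) _ _ ltac:(lia) M1 Huv). lia.
    + pose proof (Bs_mono f st (S i') i Hgt). lia.
Qed.

Theorem lemma1p1 (A : nat -> Prop) (f : nat -> nat) (hA : AP_set A) :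
  exists C : nat -> Prop,
    subset C A /\ AP_set C /\
    ( (* (1) |f[C]| = 1 *)
      (exists y, forall z, image f C z <-> z = y)
      \/
      (* (2) f finite-to-one on C, and the increasing enumeration of f[C]
             has gaps tending to infinity *)
      (finite_to_one_on f C /\
       exists x : nat -> nat, increasing_enum x (image f C) /\
         forall M : nat, exists N : nat, forall n, N <= n -> M <= x (S n) - x n) )
    /\ ~ IP_set (image f C).
Proof.
  destruct (classic (exists B, forall k, exists a d, 0 < d /\
      forall i, i < k -> A (a + i*d) /\ f (a + i*d) < B)) as [[B HB]|HnB].
  - assert (HB1 : 0 < B).
    { destruct (HB 1) as [a [d [_ H]]]. specialize (H 0 ltac:(lia)). lia. }
    assert (HA' : AP_set (fun x => A x /\ f x < B)).
    { intros k'. destruct (HB k') as [a [d [Hd H]]]. exists a, d. split; auto. }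
    assert (HQ : forall k, exists y, y < B /\ exists a d, 0 < d /\
               forall j, j < k -> A (a + j*d) /\ f (a + j*d) = y).
    { intros k.
      destruct (vdw_in _ HA' (S k) B (fun x => Nat.min (f x) (B-1)) ltac:(intros; cbv beta; lia))
        as [a [d [Hd H]]].
      destruct (H 0 ltac:(lia)) as [[_ Hf0] _].
      rewrite Nat.mul_0_l, Nat.add_0_r in Hf0.
      exists (f a). split; [exact Hf0|].
      exists a, d. split; auto. intros j Hj.
      destruct (H j ltac:(lia)) as [[HAj Hfj] Hc]. split; auto. lia. }
    destruct (inf_pigeon (fun y k => exists a d, 0 < d /\
               forall j, j < k -> A (a + j*d) /\ f (a + j*d) = y) B) as [y Hy].
    { intros y k k' [a [d [Hd H]]] Hk. exists a, d. split; auto. intros j Hj. apply H. lia. }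
    { exact HQ. }
    exists (fun x => A x /\ f x = y). split; [intros x [H _]; exact H|]. split.
    + intros k. destruct (Hy k) as [a [d [Hd H]]]. exists a, d. split; auto.
    + split.
      * left. exists y. intros z; split.
        -- intros [x [[_ E] E']]. lia.
        -- intros ->. destruct (Hy 1) as [a [d [_ H]]].
           destruct (H 0 ltac:(lia)) as [H1 H2]. exists (a+0*d). auto.
      * apply (bounded_notIP _ y). intros z [x [[_ E] E']]. lia.
  - assert (Hk : forall B, exists k, ~ exists a d, 0 < d /\
                 forall i, i < k -> A (a+i*d) /\ f (a+i*d) < B).
    { intros B. apply not_all_ex_not. intros H. apply HnB. exists B. exact H. }
    assert (Hstep : forall m B len, exists p : nat*nat, 0 < snd p /\ forall i, i < len ->
       A (fst p + i*snd p) /\ B <= f (fst p + i*snd p) /\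
       f (fst p + i*snd p) mod (S m) = f (fst p) mod (S m)).
    { intros m B len. destruct (Hk B) as [k0 Hk0].
      set (col := fun x => if f x <? B then S m else f x mod S m).
      assert (Hcol : forall x, col x < S (S m)).
      { intros x. unfold col. destruct (f x <? B); [lia|].
        pose proof (Nat.mod_upper_bound (f x) (S m) ltac:(lia)). lia. }
      destruct (vdw_in A hA (Nat.max len k0) _ col Hcol) as [a [d [Hd H]]].
      destruct (Nat.ltb_spec (f a) B) as [Hfa|Hfa].
      + exfalso. apply Hk0. exists a, d. split; auto. intros i Hi.
        destruct (H i ltac:(lia)) as [HA Hc]. split; auto.
        unfold col in Hc. destruct (Nat.ltb_spec (f a) B); [|lia].
        destruct (Nat.ltb_spec (f (a+i*d)) B); auto.
        pose proof (Nat.mod_upper_bound (f (a+i*d)) (S m) ltac:(lia)). lia.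
      + exists (a, d). simpl. split; auto. intros i Hi.
        destruct (H i ltac:(lia)) as [HA Hc]. split; auto.
        unfold col in Hc. destruct (Nat.ltb_spec (f a) B); [lia|].
        destruct (Nat.ltb_spec (f (a+i*d)) B).
        * pose proof (Nat.mod_upper_bound (f a) (S m) ltac:(lia)). lia.
        * split; [lia|exact Hc]. }
    assert (Hst : exists st : nat -> nat -> nat -> nat*nat, forall m B len,
       0 < snd (st m B len) /\ forall i, i < len ->
       A (fst (st m B len) + i*snd (st m B len)) /\ B <= f (fst (st m B len) + i*snd (st m B len)) /\
       f (fst (st m B len) + i*snd (st m B len)) mod (S m) = f (fst (st m B len)) mod (S m)).
    { exists (fun m B len => proj1_sig (constructive_indefinite_description _ (Hstep m B len))).
      intros m B len. exact (proj2_sig (constructive_indefinite_description _ (Hstep m B len))). }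
    destruct Hst as [st HP].
    destruct (caseII A f st HP) as [Hsub [HAP [Hfin [Hinf Hsep]]]].
    exists (Cset f st). split; [exact Hsub|]. split; [exact HAP|]. split.
    + right. split; [exact Hfin|].
      destruct (enum_exists _ Hinf) as [x Hx]. exists x. split; [exact Hx|].
      exact (gaps_from_sep _ x Hx Hsep).
    + exact (sep_notIP _ Hsep).
Qed.
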